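(* Let $k\in\mathbb N$ and let $\pi$ be a partition of $\{1,\dots,k\}$ with $q$ blocks. Then every graph that is consistent with $\pi$ has at most $k-q+1$ connected components.
   Context: Let $\pi$ be a partition of $\{1,\dots,k\}$ with blocks $B^{(1)},\dots,B^{(q)}$; indices are taken cyclically, i.e. $0$ is identified with $k$ and $k+1$ with $1$. The closed blocks are $\overline B^{(s)}=B^{(s)}\cup\{l\in\{1,\dots,k\}: l-1\in B^{(s)}\}$. The multiplicity $m_\pi(l)$ of $l\in\{1,\dots,k\}$ is $2$ if $l$ and $l-1$ lie in the same block of $\pi$, and $1$ otherwise. A graph consistent with $\pi$ is an undirected multigraph $G$ (loops allowed, a loop contributing $2$ to the degree) with vertex set $\{1,\dots,k\}$ and $k$ edges, whose edge set can be written as a disjoint union $E^{(1)}\cup\dots\cup E^{(q)}$ such that for each $s$, all edges of $E^{(s)}$ have both ends in $\overline B^{(s)}$ and, in the subgraph with vertex set $\overline B^{(s)}$ and edge set $E^{(s)}$, every vertex $l$ has degree $m_\pi(l)$. *)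

(* Defs.v *)
(* Vertices {1..k} of the paper are encoded as 'I_k
   (paper's l corresponds to ordinal l-1); cyclic predecessor = ord_pred. *)
From mathcomp Require Import all_boot.
Set Implicit Arguments. Unset Strict Implicit. Unset Printing Implicit Defensive.

Section Defs.
Variable k : nat.

(* cyclic predecessor l-1 (with 0 identified with k) *)
Definition cprev (l : 'I_k) : 'I_k := ord_pred l.

Definition closed_block (B : {set 'I_k}) : {set 'I_k} :=
  B :|: [set l | cprev l \in B].

Definition mult (P : {set {set 'I_k}}) (l : 'I_k) : nat :=
  if [exists B in P, (l \in B) && (cprev l \in B)] then 2 else 1.

(* A multigraph on vertex set 'I_k with k edges: edge e has endpoints
   (E e).1 and (E e).2 (unordered; a loop has equal endpoints). *)
Definition edge_fun := 'I_k -> 'I_k * 'I_k.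

(* degree of v in the subgraph with edge set A; a loop counts twice *)
Definition deg_in (E : edge_fun) (A : {set 'I_k}) (v : 'I_k) : nat :=
  #|[set e in A | (E e).1 == v]| + #|[set e in A | (E e).2 == v]|.

(* consistency with the partition P: edge colouring c assigns each edge to a block *)
Definition consistent (P : {set {set 'I_k}}) (E : edge_fun) : Prop :=
  exists c : 'I_k -> {set 'I_k},
    (forall e, c e \in P) /\
    forall B, B \in P ->
      (forall e, c e = B -> ((E e).1 \in closed_block B) /\ ((E e).2 \in closed_block B)) /\
      (forall l, l \in closed_block B ->
         deg_in E [set e | c e == B] l = mult P l).

Definition adj (E : edge_fun) : rel 'I_k :=
  fun a b => [exists e, (((E e).1 == a) && ((E e).2 == b))
                      || (((E e).2 == a) && ((E e).1 == b))].

Definition n_components (E : edge_fun) : nat :=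
  #|[set [set y | connect (adj E) x y] | x : 'I_k]|.
End Defs.

(* Main.v *)
Require Import Defs.
From mathcomp Require Import all_boot zify.
Set Implicit Arguments. Unset Strict Implicit. Unset Printing Implicit Defensive.

Section Main.
Variables (k : nat) (E : edge_fun k).

Definition compset (v : 'I_k) : {set 'I_k} := [set y | connect (adj E) v y].
Definition touches (e v : 'I_k) := ((E e).1 == v) || ((E e).2 == v).

Lemma adj_sym : symmetric (adj E).
Proof.
move=> a b; rewrite /adj; apply: eq_existsb => e; rewrite orbC; congr (_ || _); exact: andbC.
Qed.

Lemma compset_adj a b : adj E a b -> compset a = compset b.
Proof.
move=> hab; have hs := sym_connect_sym adj_sym.
apply/setP => y; rewrite !inE; apply/idP/idP => H.
- apply: connect_trans H; rewrite hs; exact: connect1.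
- exact: connect_trans (connect1 hab) H.
Qed.

Lemma compset_touch e v : touches e v -> compset (E e).1 = compset v.
Proof.
case/orP => /eqP <- //; apply: compset_adj.
apply/existsP; exists e; by rewrite !eqxx.
Qed.

Lemma deg_touch (A : {set 'I_k}) v : 0 < deg_in E A v ->
  exists e, e \in A /\ touches e v.
Proof.
rewrite /deg_in addn_gt0 => /orP [] /card_gt0P [e]; rewrite inE => /andP [eA he];
  exists e; by rewrite /touches he ?orbT.
Qed.

Lemma mult_pos (P : {set {set 'I_k}}) v : 0 < mult P v.
Proof. by rewrite /mult; case: ifP. Qed.

Lemma val_iter_ordS (w : 'I_k) i : val (iter i (@ordS k) w) = (w + i) %% k.
Proof.
elim: i => [|i IH] /=; first by rewrite addn0 modn_small.
by rewrite IH /= -addn1 modnDml addn1 addnS.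
Qed.

Lemma cyc_closed (W : {set 'I_k}) w : w \in W ->
  (forall v, v \in W -> ordS v \in W) -> forall v, v \in W.
Proof.
move=> wW hW v.
have hi : forall i, iter i (@ordS k) w \in W by elim=> //= i IH; exact: hW.
have -> : v = iter (v + k - w) (@ordS k) w.
  apply: val_inj; rewrite val_iter_ordS.
  have hw := ltn_ord w; have hv := ltn_ord v.
  rewrite subnKC; last by lia.
  by rewrite modnDr modn_small.
exact: hi.
Qed.

End Main.


Lemma grow_lemma (T aT bT : finType) (a : T -> aT) (b : T -> bT) (x0 : T) :
  (forall S : {set T}, S != set0 -> S != setT ->
     exists x y, [/\ x \notin S, y \in S & (a x == a y) || (b x == b y)]) ->
  #|a @: [set: T]| + #|b @: [set: T]| <= #|T| + 1.
Proof.
move=> conn.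
have key : forall n, 0 < n <= #|T| -> exists S : {set T},
   #|S| = n /\ #|a @: S| + #|b @: S| <= n + 1.
  elim=> [|n IH] // /andP [_ hn].
  case: n IH hn => [|n] IH hn.
    exists [set x0]; rewrite cards1 !imset_set1 !cards1; split=> //.
  have [S [cS bS]] := IH (ltnW hn).
  have S0 : S != set0 by rewrite -card_gt0 cS.
  have ST : S != setT.
    apply/negP => /eqP ST; move: hn; by rewrite -cS ST cardsT ltnn.
  have [x [y [xS yS hxy]]] := conn S S0 ST.
  exists (x |: S); rewrite cardsU1 xS cS; split=> //.
  rewrite !imsetU1 !cardsU1.
  case/orP: hxy => /eqP hxy.
  - have -> : a x \in a @: S by rewrite hxy imset_f.
    move: bS; case: (b x \in b @: S) => /=; rewrite ?add0n ?add1n; lia.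
  - have -> : b x \in b @: S by rewrite hxy imset_f.
    move: bS; case: (a x \in a @: S) => /=; rewrite ?add0n ?add1n; lia.
have T0 : 0 < #|T| by apply/card_gt0P; exists x0.
have [S [cS bS]] : exists S : {set T}, #|S| = #|T| /\ #|a @: S| + #|b @: S| <= #|T| + 1
  by apply: key; rewrite T0 leqnn.
have ST : S = setT by apply/eqP; rewrite eqEcard subsetT cS cardsT leqnn.
by rewrite -ST.
Qed.

Theorem mainTheorem2 (k : nat) (P : {set {set 'I_k}}) (E : edge_fun k) :
  partition P [set: 'I_k] ->
  consistent P E ->
  n_components E <= k - #|P| + 1.
Proof.
move=> hP [c [cP hc]].
case/and3P: hP => /eqP hcov htriv h0.
have edge_at : forall B v, B \in P -> v \in closed_block B ->
    exists f, c f = B /\ touches E f v.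
  move=> B v BP vB; have [_ hd] := hc B BP.
  have : 0 < deg_in E [set e | c e == B] v by rewrite (hd v vB) mult_pos.
  case/deg_touch => f []; rewrite inE => /eqP cf tf; by exists f.
have edge_in : forall B v, B \in P -> v \in B -> exists f, c f = B /\ touches E f v.
  by move=> B v BP vB; apply: edge_at BP _; rewrite /closed_block inE vB.
have edge_S : forall B v, B \in P -> v \in B -> exists f, c f = B /\ touches E f (ordS v).
  by move=> B v BP vB; apply: edge_at BP _; rewrite /closed_block !inE /cprev ordSK vB orbT.
have blk : forall v, pblock P v \in P /\ v \in pblock P v.
  move=> v; rewrite mem_pblock hcov inE; split=> //; apply: pblock_mem; by rewrite hcov inE.
have ncle : n_components E <= k.
  rewrite /n_components; apply: leq_trans (leq_imset_card _ _) _; by rewrite card_ord.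
clear edge_at.
case: k P E c cP hc hcov htriv h0 edge_in edge_S blk ncle => [|k'] P E c cP hc hcov htriv h0 edge_in edge_S blk ncle.
  by move: ncle; rewrite leqn0 => /eqP ->.
pose b := fun e => compset E (E e).1.
have G := @grow_lemma _ _ _ c b ord0.
have hPc : #|P| <= #|c @: [set: 'I_k'.+1]|.
  apply: subset_leq_card; apply/subsetP => B BP.
  have : B != set0 by apply: contraNneq h0 => <-.
  case/set0Pn => v vB.
  have [f [cf _]] := edge_in B v BP vB.
  by rewrite -cf imset_f.
have hnb : n_components E <= #|b @: [set: 'I_k'.+1]|.
  apply: subset_leq_card; apply/subsetP => C /imsetP [x _ ->].
  have [BP xB] := blk x.
  have [f [_ hf]] := edge_in _ x BP xB.
  apply/imsetP; exists f => //; rewrite /b (compset_touch hf) //.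
have hcT : #|c @: [set: 'I_k'.+1]| <= k'.+1.
  apply: leq_trans (leq_imset_card _ _) _; by rewrite cardsT card_ord.
suff : #|c @: [set: 'I_k'.+1]| + #|b @: [set: 'I_k'.+1]| <= #|'I_k'.+1| + 1.
  rewrite card_ord; lia.
apply: G => S S0 ST.
suff : [exists x, exists y, (x \notin S) && (y \in S) && ((c x == c y) || (b x == b y))].
  case/existsP => x /existsP [y /andP [/andP [xS yS] h]]; by exists x, y.
apply: contraT => hn.
have cl : forall x y, y \in S -> (c x == c y) || (b x == b y) -> x \in S.
  move=> x y yS h; apply: contraT => xS.
  move/existsPn: hn => /(_ x) /existsPn /(_ y); by rewrite xS yS h.
pose W := [set v | [exists e in S, touches E e v]].
have [e0 e0S] := set0Pn _ S0.
have w0 : (E e0).1 \in W.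
  rewrite inE; apply/existsP; exists e0; by rewrite e0S /touches eqxx.
have stepW : forall v, v \in W -> ordS v \in W.
  move=> v; rewrite inE => /existsP [e /andP [eS he]].
  have [BP vB] := blk v.
  have [f [cf hf]] := edge_in _ v BP vB.
  have fS : f \in S.
    apply: (cl f e eS); apply/orP; right; rewrite /b.
    by rewrite (compset_touch hf) (compset_touch he).
  have [g [cg hg]] := edge_S _ v BP vB.
  have gS : g \in S by apply: (cl g f fS); rewrite cg cf eqxx.
  rewrite inE; apply/existsP; exists g; by rewrite gS hg.
have allW := cyc_closed w0 stepW.
suff hS : S = setT by move: ST; rewrite hS eqxx.
apply/setP => x; rewrite inE.
have := allW ((E x).1); rewrite inE => /existsP [e /andP [eS he]].
apply: (cl x e eS); apply/orP; right; rewrite /b.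
rewrite (compset_touch he) //.
Qed.
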